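(* Consider a particular run of Algorithm 1 (parameter $\alpha \in (0,1/2)$). Let $\zeta$ be a constant such that $-\frac{\zeta}{w_i^t} \le \partial_i L^t(\mathbf{w}^t) \le \zeta$ for all $i \in [m]$, $t \in [T]$. Then for every $i, t$, \[(w_i^t)^{\alpha - 1} - \left(\frac{1}{w_i^t} + 1\right)\eta_t \zeta \le (w_i^{t+1})^{\alpha-1} \le (w_i^t)^{\alpha-1} + \left(\frac{1}{\min_k w_k^t} + 1\right)\eta_t \zeta.\] Furthermore, if $\eta_t \zeta \le (1-\alpha)^2 (w_i^t)^\alpha$ for all $i$, then for every $i$, \[(w_i^{t+1})^{\alpha-1} \le (w_i^t)^{\alpha-1} + (m+1)\eta_t \zeta.\]
   Context: Setting. There are $m$ experts and $n$ outcomes; $\Delta^k$ denotes the probability simplex in $\mathbb{R}^k$. For reports $\mathbf{p}^1, \dots, \mathbf{p}^m \in \Delta^n$ and $\mathbf{w} \in \Delta^m$, the logarithmic pool is $p^*_j(\mathbf{w}) = \frac{\prod_{k} (p^k_j)^{w_k}}{\sum_{\ell=1}^n \prod_{k} (p^k_\ell)^{w_k}}$. At each time $t\in[T]$, reports $\mathbf{p}^{t,1},\dots,\mathbf{p}^{t,m}$ and an outcome $j_t$ are revealed, with loss $L^t(\mathbf{w}) := -\ln p^*_{j_t}(\mathbf{w})$ and, by convention, $\partial_i L^t(\mathbf{w}) := \sum_{\ell=1}^n p^*_\ell(\mathbf{w}) \ln p^{t,i}_\ell - \ln p^{t,i}_{j_t}$. Algorithm 1 (parameter $\alpha \in (0,1/2)$):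 $R(\mathbf{w}) = -\frac{1}{\alpha}\sum_i w_i^\alpha$, $\eta = \frac{1}{\sqrt{T}\ln T}\cdot\frac{1}{12 m^{(1+\alpha)/2} n}$, $\mathbf{w}^1 = (1/m,\dots,1/m)$, $\eta_0 = +\infty$. For $t = 1,\dots,T$: if $\eta \le \min_i (w_i^t)^\alpha$ set $\eta_t = \min(\eta_{t-1}, \eta)$, else $\eta_t = \min(\eta_{t-1}, \min_i w_i^t)$; then $\mathbf{w}^{t+1} \in \Delta^m$ is defined by $-(w_i^{t+1})^{\alpha-1} = -(w_i^t)^{\alpha-1} - \eta_t \partial_i L^t(\mathbf{w}^t) + c$ for all $i$, with $c \in \mathbb{R}$ the unique constant making $\sum_i w_i^{t+1} = 1$. *)

(* Defs.v *)
From mathcomp Require Import all_boot all_order all_algebra.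
From mathcomp Require Import all_classical all_reals all_analysis.
Set Implicit Arguments. Unset Strict Implicit. Unset Printing Implicit Defensive.
Import Order.TTheory GRing.Theory Num.Theory.
Local Open Scope ring_scope.

Section Defs.
Variable R : realType.

(* minimum of a family over 'I_m, initialised with 1; used only for
   families of values in (0,1] (weights in the simplex and their
   alpha-powers), for which it is the true minimum. *)
Definition minw (m : nat) (f : 'I_m -> R) : R := \big[Num.min/1]_(i < m) f i.

(* logarithmic pool p*_l(w) of reports P k l (expert k, outcome l) *)
Definition logpool (m n : nat) (P : 'I_m -> 'I_n -> R) (w : 'I_m -> R)
  (l : 'I_n) : R :=
  (\prod_(k < m) powR (P k l) (w k)) /
  (\sum_(l' < n) \prod_(k < m) powR (P k l') (w k)).

Definition gradL (m n : nat) (P : 'I_m -> 'I_n -> R) (j : 'I_n)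
  (w : 'I_m -> R) (i : 'I_m) : R :=
  \sum_(l < n) logpool P w l * ln (P i l) - ln (P i j).

Definition eta_param (m n T : nat) (alpha : R) : R :=
  (Num.sqrt (T%:R) * ln (T%:R))^-1 *
  (12 * powR (m%:R) ((1 + alpha) / 2) * n%:R)^-1.

Definition eta_cand (m : nat) (alpha eta : R) (wt : 'I_m -> R) : R :=
  if eta <= minw (fun i => powR (wt i) alpha) then eta else minw wt.

(* eta_t for t >= 1, with eta_0 = +oo, i.e. eta_1 = eta_cand at time 1 and
   eta_{t+1} = min(eta_t, eta_cand at time t+1).  (Value at t = 0 unused.) *)
Fixpoint eta_seq (m : nat) (alpha eta : R) (w : nat -> 'I_m -> R) (t : nat)
  : R :=
  match t with
  | 0 => 0
  | 1 => eta_cand alpha eta (w 1%N)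
  | t'.+1 => Num.min (eta_seq alpha eta w t') (eta_cand alpha eta (w t))
  end.

Definition pos_simplex (k : nat) (x : 'I_k -> R) : Prop :=
  (forall i, 0 < x i) /\ \sum_(i < k) x i = 1.

(* (w, eta) is a run of Algorithm 1 with parameter alpha on reports
   P t k l (time t, expert k, outcome l) and outcomes J t, for t = 1..T *)
Definition alg1_run (m n T : nat) (alpha : R)
  (P : nat -> 'I_m -> 'I_n -> R) (J : nat -> 'I_n)
  (w : nat -> 'I_m -> R) : Prop :=
  (forall i, w 1%N i = m%:R^-1) /\
  (forall t, (1 <= t <= T.+1)%N -> pos_simplex (w t)) /\
  (forall t, (1 <= t <= T)%N ->
     exists c : R, forall i,
       - powR (w t.+1 i) (alpha - 1) =
       - powR (w t i) (alpha - 1)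
       - eta_seq alpha (eta_param m n T alpha) w t * gradL (P t) (J t) (w t) i
       + c).
End Defs.

(* Main.v *)
Require Import Defs.
From mathcomp Require Import all_boot all_order all_algebra.
From mathcomp Require Import all_classical all_reals all_analysis.
From mathcomp Require Import ring lra.
Import Order.TTheory GRing.Theory Num.Theory.
Local Open Scope ring_scope.

Section Helpers.
Variable R : realType.
Implicit Types x y e p q : R.

Lemma powRE' x e : 0 < x -> powR x e = expR (e * ln x).
Proof. by move=> x0; rewrite /powR gt_eqF. Qed.

Lemma powR_dec_le x y e : 0 < x -> 0 < y -> e < 0 ->
  (powR x e <= powR y e) = (y <= x).
Proof.
move=> x0 y0 e0; rewrite !powRE' // ler_expR ler_nM2l // ler_ln // posrE.
Qed.

Lemma powR_dec_lt x y e : 0 < x -> 0 < y -> e < 0 ->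
  (powR x e < powR y e) = (y < x).
Proof.
move=> x0 y0 e0; rewrite !powRE' // ltr_expR ltr_nM2l // ltr_ln // posrE.
Qed.

Lemma bern p q : 0 < p < 1 -> 0 < q -> powR q p <= 1 + p * (q - 1).
Proof.
move=> /andP[p0 p1] q0.
have P0 : 0 < p^-1 by rewrite invr_gt0.
have Q0 : 0 < (1 - p)^-1 by rewrite invr_gt0 subr_gt0.
have E : p^-1^-1 + (1 - p)^-1^-1 = 1 by rewrite !invrK; ring.
have H := @conjugate_powR R (powR q p) 1 (p^-1) ((1 - p)^-1) (powR_ge0 _ _) ler01 P0 Q0 E.
move: H; rewrite !invrK powR1 -powRrM mulfV ?gt_eqF // (powRr1 (ltW q0)) => H.
move: H; rewrite !mulr1 !mul1r => H. lra.
Qed.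
Lemma key (al M w a : R) : 0 < al < 1 -> 0 < M -> 0 < w -> 0 <= a ->
  a <= (1 - al)^+2 * powR w al -> a * powR M al <= (1 - al)^+2 ->
  let A := a * powR M al / (1 - al) in
  (0 < (1 - A) * w + A / M) /\ (powR ((1 - A) * w + A / M) (al - 1) <= powR w (al - 1) - a / w + a * M).
Proof.
move=> /andP[al0 al1] M0 w0 a0 haw haM A.
set b := 1 - al. set Ma := powR M al. set u := (1 - A) * w + A / M.
have b0 : 0 < b by rewrite /b subr_gt0.
have b1 : b < 1 by rewrite /b; lra.
have Ma0 : 0 < Ma by rewrite /Ma powR_gt0.
have hA : A * b = a * Ma by rewrite /A mulfVK // gt_eqF.
have A0 : 0 <= A by rewrite /A divr_ge0 // ?mulr_ge0 // ltW.
have Ab : A <= b.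
  have : A * b <= b * b by rewrite hA -expr2.
  by rewrite ler_pM2r.
have u0 : 0 < u.
  rewrite /u; apply: ltr_wpDr; first by rewrite divr_ge0 // ltW.
  by apply: mulr_gt0 => //; lra.
split => //.
set X := powR w (al - 1).
have X0 : 0 < X by rewrite /X powR_gt0.
have wX : w * X = powR w al by rewrite /X mulr_powRB1 // ltW.
set t := M * w.
have t0 : 0 < t by rewrite /t mulr_gt0.
have ta : powR t al = Ma * (w * X) by rewrite wX /t powRM // ltW.
have Mu : M * u = (1 - A) * t + A by rewrite /u /t; field; rewrite gt_eqF.
have S1 : powR u (al - 1) = X * powR (w / u) b.
  rewrite /X !powRE' ?divr_gt0 // -expRD ln_div ?posrE //.
  by congr expR; rewrite /b; ring.
have S2 : powR (w / u) b <= 1 + b * (w / u - 1).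
  by apply: bern; rewrite ?b0 ?b1 ?divr_gt0.
have hwu : b * (w - u) * M = a * Ma * (M * w - 1).
  by rewrite -hA /u; field; rewrite gt_eqF.
have sign : (t - 1) * (Ma * (w * X) - M * u) <= 0.
  rewrite Mu -ta.
  have [t1|t1] := lerP 1 t.

    have : powR t al <= 1 + al * (t - 1) by apply: bern; rewrite ?al0 ?al1.
    have hb : b = 1 - al by [].
    move=> H; apply: mulr_ge0_le0; first by rewrite subr_ge0.
    rewrite subr_le0; apply: (le_trans H); nra.
  have Bb : powR t b <= 1 + b * (t - 1) by apply: bern; rewrite ?b0 ?b1.
  have tab : powR t al * powR t b = t.
    rewrite -powRD; last by apply/implyP => _; rewrite gt_eqF.
    by rewrite /b addrC subrK powRr1 // ltW.
  have tage : 0 <= powR t al by apply: powR_ge0.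
  have tbge : 0 <= powR t b by apply: powR_ge0.
  have Ata : A <= b * powR t al.
    have : A * b <= b * powR t al * b.
      rewrite hA ta wX; move: haw; rewrite -/b expr2 => haw; nra.
    by rewrite ler_pM2r.
  have P1 : 0 <= (b * powR t al - A) * (1 - t) by apply: mulr_ge0; rewrite subr_ge0 // ltW.
  have P2 : 0 <= powR t al * (1 + b * (t - 1) - powR t b) by apply: mulr_ge0; rewrite // subr_ge0.
  apply: mulr_le0_ge0; first by rewrite subr_le0 ltW.
  rewrite subr_ge0; nra.
rewrite S1.
apply: (le_trans (ler_wpM2l (ltW X0) S2)).
have D : (X * (1 + b * (w / u - 1)) - (X - a / w + a * M)) * (M * u * w)
    = a * ((M * w - 1) * (Ma * (w * X) - M * u)).
  have -> : (X * (1 + b * (w / u - 1)) - (X - a / w + a * M)) * (M * u * w)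
      = X * w * (b * (w - u) * M) + a * M * u - a * M * M * u * w.
    by field; rewrite !gt_eqF.
  by rewrite hwu; ring.
have S : a * ((M * w - 1) * (Ma * (w * X) - M * u)) <= 0 by apply: mulr_ge0_le0.
have K : 0 < M * u * w by rewrite !mulr_gt0.
rewrite -subr_le0; nra.
Qed.
Lemma minw_gt0 m (f : 'I_m -> R) : (forall i, 0 < f i) -> 0 < minw f.
Proof.
move=> hf; rewrite /minw; elim/big_ind: _ => [|x y hx hy|i _]; first exact: ltr01.
  by rewrite lt_min hx hy.
exact: hf.
Qed.

Lemma minw_le m (f : 'I_m -> R) i : minw f <= f i.
Proof. by rewrite /minw (bigD1 i) //= ge_min lexx. Qed.

Lemma eta_seq_ge0 m (al eta : R) (w : nat -> 'I_m -> R) N :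
  0 <= eta -> (forall s, (1 <= s <= N)%N -> forall i, 0 < w s i) ->
  forall s, (s <= N)%N -> 0 <= eta_seq al eta w s.
Proof.
move=> e0 hw.
have cand : forall s, (1 <= s <= N)%N -> 0 <= eta_cand al eta (w s).
  move=> s hs; rewrite /eta_cand; case: ifP => _ //.
  by apply/ltW/minw_gt0; apply: hw.
elim=> [|s IH] hs; first exact: lexx.
case: s IH hs => [|s] IH hs; first by apply: cand.
have -> : eta_seq al eta w s.+2 =
  Num.min (eta_seq al eta w s.+1) (eta_cand al eta (w s.+2)) by [].
rewrite le_min IH ?cand //; first exact: ltnW.
Qed.

Lemma eta_param_ge0 m n T (al : R) : (1 <= T)%N -> 0 <= eta_param m n T al.
Proof.
move=> T1; rewrite /eta_param; apply: mulr_ge0; rewrite invr_ge0.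
  by apply: mulr_ge0; [exact: sqrtr_ge0 | apply: ln_ge0; rewrite ler1n].
by apply: mulr_ge0 => //; apply: mulr_ge0 => //; exact: powR_ge0.
Qed.
End Helpers.

Theorem lemma2 (R : realType) (m n T : nat) (alpha zeta : R)
  (P : nat -> 'I_m -> 'I_n -> R) (J : nat -> 'I_n) (w : nat -> 'I_m -> R) :
  0 < alpha < 2^-1 ->
  (forall t k, (1 <= t <= T)%N -> pos_simplex (P t k)) ->
  @alg1_run R m n T alpha P J w ->
  (forall t i, (1 <= t <= T)%N ->
     - (zeta / w t i) <= gradL (P t) (J t) (w t) i <= zeta) ->
  forall t, (1 <= t <= T)%N ->
    let eta_t := eta_seq alpha (eta_param m n T alpha) w t in
    (forall i,
       powR (w t i) (alpha - 1) - ((w t i)^-1 + 1) * eta_t * zeta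
         <= powR (w t.+1 i) (alpha - 1)
       /\ powR (w t.+1 i) (alpha - 1)
         <= powR (w t i) (alpha - 1) + ((minw (w t))^-1 + 1) * eta_t * zeta)
    /\
    ((forall i, eta_t * zeta <= (1 - alpha)^+2 * powR (w t i) alpha) ->
     forall i, powR (w t.+1 i) (alpha - 1)
                 <= powR (w t i) (alpha - 1) + (m%:R + 1) * eta_t * zeta).
Proof.
move=> /andP[al0 al2] _ [_ [hpos hstep]] hg t /andP[t1 tT] eta_t.
have al1 : alpha < 1 by lra.
have tT1 : (1 <= t <= T.+1)%N by rewrite t1 /= (leq_trans tT).
have t1T1 : (1 <= t.+1 <= T.+1)%N by apply/andP; split => //; rewrite ltnS.
have [wpos wsum] := hpos t tT1.
have [w1pos w1sum] := hpos t.+1 t1T1.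
have [c hc] := hstep t (introT andP (conj t1 tT)).
have eta0 : 0 <= eta_t.
  apply: (@eta_seq_ge0 R m alpha _ w T.+1).
  - by apply: eta_param_ge0; apply: leq_trans tT.
  - by move=> s /hpos [].
  - exact: leqW.
set g := fun i => gradL (P t) (J t) (w t) i.
have hy : forall i, powR (w t.+1 i) (alpha - 1) =
    powR (w t i) (alpha - 1) + eta_t * g i - c.
  by move=> i; move: (hc i); rewrite /g -/eta_t => E; lra.
have hgi : forall i, - (zeta / w t i) <= g i <= zeta.
  by move=> i; apply: hg; rewrite t1 tT.
have em1 : alpha - 1 < 0 by lra.
clearbody eta_t g.
have sumlt : forall (i : 'I_m) (F G : 'I_m -> R), (forall k, F k < G k) ->
    \sum_(k < m) F k < \sum_(k < m) G k.
  move=> i F G hFG; apply: ltr_sum => //.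
  by apply/hasP; exists i => //; rewrite mem_index_enum.
have ex1 : forall i : 'I_m, exists i0, c <= eta_t * g i0.
  move=> i; have [//|nex] := pselect (exists i0, c <= eta_t * g i0).
  have H k : eta_t * g k < c.
    by rewrite ltNge; apply/negP => h; apply: nex; exists k.
  have : \sum_(k < m) w t k < \sum_(k < m) w t.+1 k.
    apply: (sumlt i) => k; rewrite -(@powR_dec_lt R _ _ _ (w1pos k) (wpos k) em1).
    by rewrite hy; move: (H k); lra.
  by rewrite wsum w1sum ltxx.
have ex2 : forall i : 'I_m, exists j0, eta_t * g j0 <= c.
  move=> i; have [//|nex] := pselect (exists j0, eta_t * g j0 <= c).
  have H k : c < eta_t * g k.
    by rewrite ltNge; apply/negP => h; apply: nex; exists k.
  have : \sum_(k < m) w t.+1 k < \sum_(k < m) w t k.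
    apply: (sumlt i) => k; rewrite -(@powR_dec_lt R _ _ _ (wpos k) (w1pos k) em1).
    by rewrite hy; move: (H k); lra.
  by rewrite wsum w1sum ltxx.
have z0 : forall i : 'I_m, 0 <= zeta.
  move=> i; case: (lerP 0 zeta) => // zn; exfalso.
  have := hgi i => /andP[h1 h2].
  have : zeta / w t i < 0 by rewrite pmulr_llt0 // invr_gt0.
  lra.
split.
  move=> i; have [i0 h0] := ex1 i; have [j0 h0'] := ex2 i.
  have ze := z0 i.
  have /andP[gl gu] := hgi i.
  have /andP[gl0 gu0] := hgi i0.
  have /andP[gl1 gu1] := hgi j0.
  have A1 : eta_t * (- (zeta / w t i)) <= eta_t * g i by apply: ler_wpM2l.
  have A2 : eta_t * g i0 <= eta_t * zeta by apply: ler_wpM2l.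
  have A3 : eta_t * g i <= eta_t * zeta by apply: ler_wpM2l.
  have A4 : eta_t * (- (zeta / w t j0)) <= eta_t * g j0 by apply: ler_wpM2l.
  have mw0 : 0 < minw (w t) by apply: minw_gt0.
  have A5 : zeta / w t j0 <= zeta / minw (w t).
    apply: ler_wpM2l => //; rewrite lef_pV2 ?posrE //; exact: minw_le.
  have A6 : eta_t * (zeta / w t j0) <= eta_t * (zeta / minw (w t)) by apply: ler_wpM2l.
  rewrite hy; clear hc hstep hg hpos sumlt ex1 ex2 z0 hy hgi; split.
    have -> : ((w t i)^-1 + 1) * eta_t * zeta = eta_t * (zeta / w t i) + eta_t * zeta.
      by rewrite /=; ring.
    lra.
  have -> : ((minw (w t))^-1 + 1) * eta_t * zeta = eta_t * (zeta / minw (w t)) + eta_t * zeta.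
    by ring.
  lra.
move=> H2 i.
have ze := z0 i.
have alb : 0 < alpha < 1 by rewrite al0 al1.
have [a ha] : exists a, a = eta_t * zeta by eexists.
have a0 : 0 <= a by rewrite ha mulr_ge0.
have [M hM] : exists M : R, M = m%:R by eexists.
have m0 : (0 < m)%N by apply: leq_ltn_trans (leq0n i) (ltn_ord i).
have M0 : 0 < M by rewrite hM ltr0n.
have H2' : forall j, a <= (1 - alpha)^+2 * powR (w t j) alpha by move=> j; rewrite ha.
have cM : -(M * a) <= c.
  rewrite leNgt; apply/negP => hcM.
  have [k hk] : exists k, w t k <= M^-1.
    have [//|nex] := pselect (exists k, w t k <= M^-1).
    have H k : M^-1 < w t k by rewrite ltNge; apply/negP => h; apply: nex; exists k.
    have : \sum_(k < m) M^-1 < \sum_(k < m) w t k by apply: (sumlt i).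
    by rewrite wsum sumr_const card_ord -mulr_natr -hM mulVf ?gt_eqF // ltxx.
  have haM : a * powR M alpha <= (1 - alpha)^+2.
    have h1 := H2' k.
    have h2 : powR (w t k) alpha * powR M alpha <= 1.
      rewrite -(powRM _ (ltW (wpos k)) (ltW M0)).
      have hwM : w t k * M <= 1 by rewrite -ler_pdivlMr // div1r.
      have := @ge0_ler_powR R alpha (ltW al0) (w t k * M) 1.
      rewrite powR1 /= => h; apply: h => //; rewrite nnegrE ?ltW ?mulr_gt0 //.
    have pM0 : 0 <= powR M alpha by apply: powR_ge0.
    have pw0 : 0 <= powR (w t k) alpha by apply: powR_ge0.
    have b0 : 0 <= (1 - alpha)^+2 by apply: sqr_ge0.
    have P1 : 0 <= ((1 - alpha)^+2 * powR (w t k) alpha - a) * powR M alpha.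
      by apply: mulr_ge0; rewrite // subr_ge0.
    have P2 : 0 <= (1 - alpha)^+2 * (1 - powR (w t k) alpha * powR M alpha).
      by apply: mulr_ge0; rewrite // subr_ge0.
    clear -P1 P2; nra.
  set A := a * powR M alpha / (1 - alpha).
  have : \sum_(k < m) w t.+1 k < \sum_(k < m) ((1 - A) * w t k + A / M).
    apply: (sumlt i) => j.
    have [u0 hu] := @key R _ _ _ _ alb M0 (wpos j) a0 (H2' j) haM.
    rewrite -(@powR_dec_lt R _ _ _ u0 (w1pos j) em1).
    apply: (le_lt_trans hu); rewrite hy.
    have /andP[gl _] := hgi j.
    have G : eta_t * - (zeta / w t j) <= eta_t * g j by apply: ler_wpM2l.
    have -> : a / w t j = eta_t * (zeta / w t j) by rewrite ha mulrA.
    clear hc hstep hg hpos sumlt ex1 ex2 z0 hy hgi H2 H2'.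
    lra.
  rewrite w1sum big_split /= -mulr_sumr wsum sumr_const card_ord -mulr_natr -hM.
  rewrite divfK ?gt_eqF // mulr1 => h.
  clear hc hstep hg hpos sumlt ex1 ex2 z0 hy hgi H2 H2'.
  lra.
rewrite hy -hM.
have /andP[_ gu] := hgi i.
have G : eta_t * g i <= eta_t * zeta by apply: ler_wpM2l.
have -> : (M + 1) * eta_t * zeta = M * a + a by rewrite ha; ring.
rewrite -ha in G.
clear hc hstep hg hpos sumlt ex1 ex2 z0 hy hgi H2 H2'.
lra.
Qed.
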